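(* Let $m_1,m_2$ be reactive monitors and $t\in\mathrm{Act}^\omega$. Then: (1) $m_1\otimes m_2$ rejects $t$ iff $m_1$ rejects $t$ or $m_2$ rejects $t$; (2) $m_1\otimes m_2$ accepts $t$ iff both $m_1$ and $m_2$ accept $t$; (3) $m_1\oplus m_2$ rejects $t$ iff both $m_1$ and $m_2$ reject $t$; (4) $m_1\oplus m_2$ accepts $t$ iff $m_1$ accepts $t$ or $m_2$ accepts $t$.
   Context: Fix a finite set $\mathrm{Act}$ of external actions and an internal action $\tau\notin\mathrm{Act}$. Monitors are given by $m,n ::= v \mid a.m \mid m+n \mid \mathrm{rec}\,x.m \mid x \mid m\otimes n\mid m\oplus n$ with verdicts $v::=\mathrm{end}\mid\mathrm{no}\mid\mathrm{yes}$. Monitor transitions ($\mu\in\mathrm{Act}\cup\{\tau\}$, $a\in\mathrm{Act}$, $\odot\in\{\otimes,\oplus\}$) are the least relation with: $a.m\xrightarrow{a}m$; $\mathrm{rec}\,x.m\xrightarrow{\tau}m[\mathrm{rec}\,x.m/x]$; if $m\xrightarrow{\mu}m'$ then $m+n\xrightarrow{\mu}m'$ and $n+m\xrightarrow{\mu}m'$; $v\xrightarrow{a}v$ for every verdict; if $m\xrightarrow{a}m'$ and $n\xrightarrow{a}n'$ then $m\odot n\xrightarrow{a}m'\odot n'$; if $m\xrightarrow{\tau}m'$ then $m\odot n\xrightarrow{\tau}m'\odot n$ and $n\odot m\xrightarrow{\tau}n\odot m'$; $\mathrm{end}\odot\mathrm{end}\xrightarrow{\tau}\mathrm{end}$; $\mathrm{yes}\otimes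 m\xrightarrow{\tau}m$, $m\otimes\mathrm{yes}\xrightarrow{\tau}m$, $\mathrm{no}\otimes m\xrightarrow{\tau}\mathrm{no}$, $m\otimes\mathrm{no}\xrightarrow{\tau}\mathrm{no}$, $\mathrm{no}\oplus m\xrightarrow{\tau}m$, $m\oplus\mathrm{no}\xrightarrow{\tau}m$, $\mathrm{yes}\oplus m\xrightarrow{\tau}\mathrm{yes}$, $m\oplus\mathrm{yes}\xrightarrow{\tau}\mathrm{yes}$. Weak transitions: $r\Rightarrow r'$ means $r(\xrightarrow{\tau})^*r'$, $r\overset{a}{\Longrightarrow}r'$ means $r\Rightarrow\cdot\xrightarrow{a}\cdot\Rightarrow r'$, extended to finite traces by concatenation. Processes are states of an arbitrary LTS with labels in $\mathrm{Act}\cup\{\tau\}$; the instrumented system $m\triangleleft p$ has transitions: if $p\xrightarrow{a}p'$ and $m\xrightarrow{a}m'$ then $m\triangleleft p\xrightarrow{a}m'\triangleleft p'$; if $p\xrightarrow{a}p'$ and $m$ has neither an $a$- nor a $\tau$-transition then $m\triangleleft p\xrightarrow{a}\mathrm{end}\triangleleft p'$; if $p\xrightarrow{\tau}p'$ then $m\triangleleft p\xrightarrow{\tau}m\triangleleft p'$; if $m\xrightarrow{\tau}m'$ then $m\triangleleft p\xrightarrow{\tau}m'\triangleleft p$. A monitor $m$ rejects (resp. accepts) a finite trace $s\in\mathrm{Act}^*$ if there exist a process $p$ of some LTS and a process $p'$ with $m\triangleleft p\overset{s}{\Longrightarrow}\mathrm{no}\triangleleft p'$ (resp. $\mathrm{yes}\triangleleft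 p'$); $m$ rejects (resp. accepts) an infinite trace $t\in\mathrm{Act}^\omega$ if it rejects (resp. accepts) some finite prefix of $t$. A monitor $m$ is reactive if for every $n$ reachable from $m$ by a finite sequence of transitions (labels in $\mathrm{Act}\cup\{\tau\}$) and every $a\in\mathrm{Act}$ there is $n'$ with $n\overset{a}{\Longrightarrow}n'$. *)

(* Defs.v *)
From mathcomp Require Import all_boot.
From Stdlib Require Import Relations.

Set Implicit Arguments.
Unset Strict Implicit.
Unset Printing Implicit Defensive.

Inductive verdict := Vend | Vno | Vyes.

(* Monitor syntax; recursion variables are de Bruijn indices
   (rec binds index 0). *)
Inductive mon (A : Type) : Type :=
| MVerd : verdict -> mon A
| MPre  : A -> mon A -> mon A
| MSum  : mon A -> mon A -> mon A
| MRec  : mon A -> mon A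
| MVar  : nat -> mon A
| MConj : mon A -> mon A -> mon A       (* m (x) n *)
| MDisj : mon A -> mon A -> mon A.      (* m (+) n *)
Arguments MVerd {A}.
Arguments MVar {A}.

Fixpoint mlift (A : Type) (c : nat) (m : mon A) : mon A :=
  match m with
  | MVerd v => MVerd v
  | MPre a m => MPre a (mlift c m)
  | MSum m n => MSum (mlift c m) (mlift c n)
  | MRec m => MRec (mlift c.+1 m)
  | MVar k => if k < c then MVar k else MVar k.+1
  | MConj m n => MConj (mlift c m) (mlift c n)
  | MDisj m n => MDisj (mlift c m) (mlift c n)
  end.

Fixpoint msubst (A : Type) (n : mon A) (k : nat) (m : mon A) : mon A :=
  match m with
  | MVerd v => MVerd v
  | MPre a m => MPre a (msubst n k m)
  | MSum m1 m2 => MSum (msubst n k m1) (msubst n k m2)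
  | MRec m => MRec (msubst (mlift 0 n) k.+1 m)
  | MVar j => if j == k then n else if j < k then MVar j else MVar j.-1
  | MConj m1 m2 => MConj (msubst n k m1) (msubst n k m2)
  | MDisj m1 m2 => MDisj (msubst n k m1) (msubst n k m2)
  end.

(* Labels: Some a = external action a, None = tau *)
Inductive mstep (A : Type) : mon A -> option A -> mon A -> Prop :=
| MS_pre a m : mstep (MPre a m) (Some a) m
| MS_rec m : mstep (MRec m) None (msubst (MRec m) 0 m)
| MS_sumL m n mu m' : mstep m mu m' -> mstep (MSum m n) mu m'
| MS_sumR m n mu m' : mstep m mu m' -> mstep (MSum n m) mu m'
| MS_verd v a : mstep (MVerd v) (Some a) (MVerd v)
| MS_conj_sync m n m' n' a :
    mstep m (Some a) m' -> mstep n (Some a) n' -> mstep (MConj m n) (Some a) (MConj m' n')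
| MS_disj_sync m n m' n' a :
    mstep m (Some a) m' -> mstep n (Some a) n' -> mstep (MDisj m n) (Some a) (MDisj m' n')
| MS_conj_tauL m m' n : mstep m None m' -> mstep (MConj m n) None (MConj m' n)
| MS_conj_tauR m m' n : mstep m None m' -> mstep (MConj n m) None (MConj n m')
| MS_disj_tauL m m' n : mstep m None m' -> mstep (MDisj m n) None (MDisj m' n)
| MS_disj_tauR m m' n : mstep m None m' -> mstep (MDisj n m) None (MDisj n m')
| MS_conj_end : mstep (MConj (MVerd Vend) (MVerd Vend)) None (MVerd Vend)
| MS_disj_end : mstep (MDisj (MVerd Vend) (MVerd Vend)) None (MVerd Vend)
| MS_conj_yesL m : mstep (MConj (MVerd Vyes) m) None m
| MS_conj_yesR m : mstep (MConj m (MVerd Vyes)) None m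
| MS_conj_noL m : mstep (MConj (MVerd Vno) m) None (MVerd Vno)
| MS_conj_noR m : mstep (MConj m (MVerd Vno)) None (MVerd Vno)
| MS_disj_noL m : mstep (MDisj (MVerd Vno) m) None m
| MS_disj_noR m : mstep (MDisj m (MVerd Vno)) None m
| MS_disj_yesL m : mstep (MDisj (MVerd Vyes) m) None (MVerd Vyes)
| MS_disj_yesR m : mstep (MDisj m (MVerd Vyes)) None (MVerd Vyes).

Definition tau_star (A S : Type) (step : S -> option A -> S -> Prop) : relation S :=
  clos_refl_trans S (fun x y => step x None y).

Inductive wtrace (A S : Type) (step : S -> option A -> S -> Prop) :
  S -> seq A -> S -> Prop :=
| WT_nil r r' : tau_star step r r' -> wtrace step r [::] r'
| WT_cons r r1 r2 r' a s :
    tau_star step r r1 -> step r1 (Some a) r2 -> wtrace step r2 s r' ->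
    wtrace step r (a :: s) r'.

Definition wstep (A S : Type) (step : S -> option A -> S -> Prop) (r : S) (a : A) (r' : S) :=
  wtrace step r [:: a] r'.

Inductive istep (A P : Type) (pstep : P -> option A -> P -> Prop) :
  mon A * P -> option A -> mon A * P -> Prop :=
| IS_mon m m' p p' a :
    pstep p (Some a) p' -> mstep m (Some a) m' -> istep pstep (m, p) (Some a) (m', p')
| IS_term m p p' a :
    pstep p (Some a) p' -> ~ (exists m', mstep m (Some a) m') -> ~ (exists m', mstep m None m') ->
    istep pstep (m, p) (Some a) (MVerd Vend, p')
| IS_ptau m p p' : pstep p None p' -> istep pstep (m, p) None (m, p')
| IS_mtau m m' p : mstep m None m' -> istep pstep (m, p) None (m', p).

Definition reaches_fin (A : Type) (m : mon A) (s : seq A) (v : verdict) : Prop :=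
  exists (P : Type) (pstep : P -> option A -> P -> Prop) (p p' : P),
    wtrace (istep pstep) (m, p) s (MVerd v, p').

Definition rejects_fin (A : Type) (m : mon A) (s : seq A) := reaches_fin m s Vno.
Definition accepts_fin (A : Type) (m : mon A) (s : seq A) := reaches_fin m s Vyes.

(* infinite traces as streams nat -> A; prefix of length n *)
Definition prefix (A : Type) (t : nat -> A) (n : nat) : seq A := map t (iota 0 n).

Definition rejects_inf (A : Type) (m : mon A) (t : nat -> A) :=
  exists n, rejects_fin m (prefix t n).
Definition accepts_inf (A : Type) (m : mon A) (t : nat -> A) :=
  exists n, accepts_fin m (prefix t n).

Definition mreach (A : Type) : relation (mon A) :=
  clos_refl_trans (mon A) (fun x y => exists mu, mstep x mu y).

Definition reactive (A : Type) (m : mon A) : Prop :=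
  forall n, mreach m n -> forall a : A, exists n', wstep (@mstep A) n a n'.

(* Main.v *)
Require Import Defs.
From mathcomp Require Import all_boot.
From Stdlib Require Import Relations.
Set Implicit Arguments.
Unset Strict Implicit.

Inductive ltr (A S : Type) (step : S -> option A -> S -> Prop) : S -> seq A -> S -> Prop :=
| L0 x : ltr step x [::] x
| Ltau x y s z : step x None y -> ltr step y s z -> ltr step x s z
| Lact x y a s z : step x (Some a) y -> ltr step y s z -> ltr step x (a :: s) z.
Global Hint Constructors ltr : core.

Lemma ltr_app A S step x s1 y s2 z :
  @ltr A S step x s1 y -> ltr step y s2 z -> ltr step x (s1 ++ s2) z.
Proof. induction 1; intros; simpl; eauto. Qed.

Lemma ltr_split A S step x s1 s2 z :
  @ltr A S step x (s1 ++ s2) z -> exists y, ltr step x s1 y /\ ltr step y s2 z.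
Proof.
  intros H. remember (s1 ++ s2) as s eqn:E. revert s1 E.
  induction H; intros s1 E.
  - destruct s1; [|discriminate]. simpl in E. subst. exists x; split; constructor.
  - destruct (IHltr s1 E) as [y0 [H1 H2]]. exists y0; split; eauto.
  - destruct s1 as [|b s1].
    + simpl in E. subst. exists x; split; eauto.
    + simpl in E. injection E as -> E'. destruct (IHltr s1 E') as [y0 [H1 H2]].
      exists y0; split; eauto.
Qed.

Lemma tau_ltr A S step x y s z : tau_star step x y -> @ltr A S step y s z -> ltr step x s z.
Proof.
  intros H. unfold tau_star in H. apply clos_rt_rt1n in H.
  induction H; intros; eauto.
Qed.

Lemma wtrace_ltr A S step x s z : @wtrace A S step x s z -> ltr step x s z.
Proof.
  induction 1.
  - eapply tau_ltr; eauto.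
  - eapply tau_ltr; eauto.
Qed.

Lemma wtrace_tau A S step x y s z : step x None y -> @wtrace A S step y s z -> wtrace step x s z.
Proof.
  intros H1 H2. inversion H2; subst.
  - apply WT_nil. eapply rt_trans; [apply rt_step; exact H1| exact H].
  - eapply WT_cons; [| eassumption | eassumption].
    eapply rt_trans; [apply rt_step; exact H1| exact H].
Qed.

Lemma ltr_wtrace A S step x s z : @ltr A S step x s z -> wtrace step x s z.
Proof.
  induction 1.
  - apply WT_nil. apply rt_refl.
  - eapply wtrace_tau; eauto.
  - eapply WT_cons; [apply rt_refl | eassumption | eassumption].
Qed.

Lemma verd_ltr A v s r : ltr (@mstep A) (MVerd v) s r -> r = MVerd v.
Proof.
  intros H; remember (MVerd v) as x eqn:E; induction H; subst; auto.
  - inversion H.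
  - inversion H; subst. apply IHltr; reflexivity.
Qed.

Lemma ltr_nil_lift A (f : mon A -> mon A) :
  (forall b b', mstep b None b' -> mstep (f b) None (f b')) ->
  forall b b', ltr (@mstep A) b [::] b' -> ltr (@mstep A) (f b) [::] (f b').
Proof.
  intros Hf b b' H. remember [::] as s eqn:E. induction H; subst; eauto.
  discriminate.
Qed.

Lemma ltr_cons_inv A S step x c s z : @ltr A S step x (c :: s) z ->
  exists x1 x2, ltr step x [::] x1 /\ step x1 (Some c) x2 /\ ltr step x2 s z.
Proof.
  intros H. remember (c :: s) as s0 eqn:E. induction H.
  - discriminate.
  - destruct (IHltr E) as [x1 [x2 [H1 [H2 H3]]]]. exists x1, x2; eauto.
  - injection E as -> ->. exists x, y; eauto.
Qed.

Lemma lift_gen A (f : mon A -> mon A -> mon A) :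
 (forall a a' b, mstep a None a' -> mstep (f a b) None (f a' b)) ->
 (forall a b b', mstep b None b' -> mstep (f a b) None (f a b')) ->
 (forall a a' b b' c, mstep a (Some c) a' -> mstep b (Some c) b' -> mstep (f a b) (Some c) (f a' b')) ->
 forall a s a' b b', ltr (@mstep A) a s a' -> ltr (@mstep A) b s b' -> ltr (@mstep A) (f a b) s (f a' b').
Proof.
  intros HL HR HS a s a' b b' H. revert b b'. induction H; intros b b' Hb.
  - apply (ltr_nil_lift (f := f x)); auto.
  - eapply Ltau; [apply HL; eassumption|]. auto.
  - destruct (ltr_cons_inv Hb) as [x1 [x2 [H1 [H2 H3]]]].
    change (a :: s) with ([::] ++ a :: s). eapply ltr_app.
    + apply (ltr_nil_lift (f := f x)); [|exact H1]. auto.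
    + eapply Lact; [apply HS; eassumption|]. auto.
Qed.

Lemma conj_lift A a s a' b b' : ltr (@mstep A) a s a' -> ltr (@mstep A) b s b' ->
  ltr (@mstep A) (MConj a b) s (MConj a' b').
Proof. apply lift_gen; intros; constructor; auto. Qed.

Lemma disj_lift A a s a' b b' : ltr (@mstep A) a s a' -> ltr (@mstep A) b s b' ->
  ltr (@mstep A) (MDisj a b) s (MDisj a' b').
Proof. apply lift_gen; intros; constructor; auto. Qed.

Definition Pdec A (u z : verdict) (g : mon A -> mon A -> mon A) a b s r :=
  (exists a' b', r = g a' b' /\ ltr (@mstep A) a s a' /\ ltr (@mstep A) b s b') \/
  (exists s1 s2 x, s = s1 ++ s2 /\
     ((ltr (@mstep A) a s1 (MVerd u) /\ ltr (@mstep A) b s1 x) \/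
      (ltr (@mstep A) b s1 (MVerd u) /\ ltr (@mstep A) a s1 x) \/
      ((ltr (@mstep A) a s1 (MVerd z) \/ ltr (@mstep A) b s1 (MVerd z)) /\ x = MVerd z) \/
      x = MVerd Vend) /\ ltr (@mstep A) x s2 r).

Lemma conj_dec A a b s r : ltr (@mstep A) (MConj a b) s r -> Pdec Vyes Vno (@MConj A) a b s r.
Proof.
  intros H. remember (MConj a b) as x eqn:E. revert a b E.
  induction H; intros a0 b0 E; subst.
  - left. exists a0, b0; eauto.
  - inversion H; subst.
    + destruct (IHltr _ _ erefl) as [[a' [b' [-> [Q1 Q2]]]] | [s1 [s2 [x [-> [Hc Hx]]]]]].
      * left; exists a', b'; eauto.
      * right; exists s1, s2, x; split; [reflexivity|]; split; [|exact Hx].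
        destruct Hc as [[? ?]|[[? ?]|[[[?|?] ?]|?]]]; eauto 8.
    + destruct (IHltr _ _ erefl) as [[a' [b' [-> [Q1 Q2]]]] | [s1 [s2 [x [-> [Hc Hx]]]]]].
      * left; exists a', b'; eauto.
      * right; exists s1, s2, x; split; [reflexivity|]; split; [|exact Hx].
        destruct Hc as [[? ?]|[[? ?]|[[[?|?] ?]|?]]]; eauto 8.
    + right; exists [::], s, (MVerd Vend); eauto 8.
    + right; exists [::], s, y; eauto 8.
    + right; exists [::], s, y; eauto 8.
    + right; exists [::], s, (MVerd Vno); eauto 8.
    + right; exists [::], s, (MVerd Vno); eauto 8.
  - inversion H; subst.
    destruct (IHltr _ _ erefl) as [[a' [b' [-> [Q1 Q2]]]] | [s1 [s2 [x [-> [Hc Hx]]]]]].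
    * left; exists a', b'; eauto.
    * right; exists (a :: s1), s2, x; split; [reflexivity|]; split; [|exact Hx].
      destruct Hc as [[? ?]|[[? ?]|[[[?|?] ?]|?]]]; eauto 8.
Qed.

Lemma disj_dec A a b s r : ltr (@mstep A) (MDisj a b) s r -> Pdec Vno Vyes (@MDisj A) a b s r.
Proof.
  intros H. remember (MDisj a b) as x eqn:E. revert a b E.
  induction H; intros a0 b0 E; subst.
  - left. exists a0, b0; eauto.
  - inversion H; subst.
    + destruct (IHltr _ _ erefl) as [[a' [b' [-> [Q1 Q2]]]] | [s1 [s2 [x [-> [Hc Hx]]]]]].
      * left; exists a', b'; eauto.
      * right; exists s1, s2, x; split; [reflexivity|]; split; [|exact Hx].
        destruct Hc as [[? ?]|[[? ?]|[[[?|?] ?]|?]]]; eauto 8.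
    + destruct (IHltr _ _ erefl) as [[a' [b' [-> [Q1 Q2]]]] | [s1 [s2 [x [-> [Hc Hx]]]]]].
      * left; exists a', b'; eauto.
      * right; exists s1, s2, x; split; [reflexivity|]; split; [|exact Hx].
        destruct Hc as [[? ?]|[[? ?]|[[[?|?] ?]|?]]]; eauto 8.
    + right; exists [::], s, (MVerd Vend); eauto 8.
    + right; exists [::], s, y; eauto 8.
    + right; exists [::], s, y; eauto 8.
    + right; exists [::], s, (MVerd Vyes); eauto 8.
    + right; exists [::], s, (MVerd Vyes); eauto 8.
  - inversion H; subst.
    destruct (IHltr _ _ erefl) as [[a' [b' [-> [Q1 Q2]]]] | [s1 [s2 [x [-> [Hc Hx]]]]]].
    * left; exists a', b'; eauto.
    * right; exists (a :: s1), s2, x; split; [reflexivity|]; split; [|exact Hx].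
      destruct Hc as [[? ?]|[[? ?]|[[[?|?] ?]|?]]]; eauto 8.
Qed.

Lemma ist_end A P (ps : P -> option A -> P -> Prop) x s y :
  ltr (istep ps) x s y -> x.1 = MVerd Vend -> y.1 = MVerd Vend.
Proof.
  induction 1; intros E; auto.
  - inversion H; subst; simpl in *; subst.
    + apply IHltr; reflexivity.
    + match goal with h : mstep (MVerd _) _ _ |- _ => inversion h end.
  - inversion H; subst; simpl in *; subst; apply IHltr; try reflexivity.
    match goal with h : mstep (MVerd _) _ _ |- _ => inversion h end. reflexivity.
Qed.

Lemma ist_proj A P (ps : P -> option A -> P -> Prop) x s y :
  ltr (istep ps) x s y -> y.1 = MVerd Vend \/ ltr (@mstep A) x.1 s y.1.
Proof.
  induction 1.
  - right; constructor.
  - inversion H; subst; simpl in *; auto.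
    destruct IHltr; auto. right; eauto.
  - inversion H; subst; simpl in *.
    + destruct IHltr; auto. right; eauto.
    + left. apply (ist_end H0). reflexivity.
Qed.

Lemma reach_iff A (m : mon A) s v : v <> Vend ->
  (reaches_fin m s v <-> ltr (@mstep A) m s (MVerd v)).
Proof.
  intros Hv; split.
  - intros [P [ps [p [p' H]]]]. apply wtrace_ltr in H.
    destruct (ist_proj H) as [E|E]; simpl in E; [|exact E].
    injection E as E. contradiction.
  - intros H. exists unit, (fun _ o _ => exists a, o = Some a), tt, tt.
    apply ltr_wtrace.
    assert (G : forall x s y, ltr (@mstep A) x s y ->
      ltr (istep (fun (_ : unit) o (_ : unit) => exists a, o = Some a)) (x, tt) s (y, tt)).
    { clear. induction 1; [constructor| |].
      - eapply Ltau; [apply IS_mtau; eassumption|]. exact IHltr.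
      - eapply Lact; [apply IS_mon; [exists a; reflexivity| eassumption]|]. exact IHltr. }
    auto.
Qed.

Lemma prefix_pre A (t : nat -> A) n s1 s2 : s1 ++ s2 = Defs.prefix t n -> s1 = Defs.prefix t (size s1).
Proof.
  unfold Defs.prefix. generalize 0. revert n.
  induction s1 as [|c s1 IH]; intros n i E; [reflexivity|].
  destruct n as [|n]; [discriminate|]. simpl in E. injection E as -> E.
  simpl. f_equal. eapply IH; exact E.
Qed.

Lemma prefix_split A (t : nat -> A) n1 n2 : n1 <= n2 -> exists r, Defs.prefix t n2 = Defs.prefix t n1 ++ r.
Proof.
  intros H. unfold Defs.prefix. rewrite -(subnKC H) iotaD map_cat. eexists; reflexivity.
Qed.

Lemma ltr_mreach A (m : mon A) s n : ltr (@mstep A) m s n -> mreach m n.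
Proof.
  induction 1.
  - apply rt_refl.
  - eapply rt_trans; [apply rt_step; eexists; eassumption| assumption].
  - eapply rt_trans; [apply rt_step; eexists; eassumption| assumption].
Qed.

Lemma follow A (s : seq A) : forall m, reactive m -> exists y, ltr (@mstep A) m s y.
Proof.
  induction s as [|c s IH]; intros m Hm.
  - exists m; constructor.
  - destruct (Hm m (rt_refl _ _ _) c) as [n' Hn]. apply wtrace_ltr in Hn.
    assert (Hr : reactive n').
    { intros n Hn2. apply Hm. eapply rt_trans; [|exact Hn2].
      apply ltr_mreach with (s := [:: c]); exact Hn. }
    destruct (IH _ Hr) as [y Hy]. exists y.
    change (c :: s) with ([:: c] ++ s). eapply ltr_app; eassumption.
Qed.

Lemma inf_of_fin A (m : mon A) t s1 s2 n v : v <> Vend ->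
  ltr (@mstep A) m s1 (MVerd v) -> s1 ++ s2 = Defs.prefix t n ->
  exists n', reaches_fin m (Defs.prefix t n') v.
Proof.
  intros Hv H E. exists (size s1). rewrite -(prefix_pre E). apply/reach_iff; auto.
Qed.

Ltac vcontra := match goal with
  | h : ltr _ (MVerd ?v) _ (MVerd ?w) |- _ =>
      apply verd_ltr in h; discriminate h
  end.

Lemma no_ne : Vno <> Vend. Proof. discriminate. Qed.
Lemma yes_ne : Vyes <> Vend. Proof. discriminate. Qed.

Lemma part_absorb A (g : mon A -> mon A -> mon A) u z (m1 m2 : mon A) t
  (Hz : z <> Vend) (Hu : u <> z)
  (Hdec : forall a b s r, ltr (@mstep A) (g a b) s r -> Pdec u z g a b s r)
  (Hlift : forall a s a' b b', ltr (@mstep A) a s a' -> ltr (@mstep A) b s b' ->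
       ltr (@mstep A) (g a b) s (g a' b'))
  (HL : forall m, mstep (g (MVerd z) m) None (MVerd z))
  (HR : forall m, mstep (g m (MVerd z)) None (MVerd z))
  (Hg : forall a b v, g a b <> MVerd v) :
  reactive m1 -> reactive m2 ->
  ((exists n, reaches_fin (g m1 m2) (Defs.prefix t n) z) <->
   (exists n, reaches_fin m1 (Defs.prefix t n) z) \/ (exists n, reaches_fin m2 (Defs.prefix t n) z)).
Proof.
  intros R1 R2; split.
  - intros [n H]. apply (reach_iff _ _ Hz) in H. apply Hdec in H.
    destruct H as [[a' [b' [E _]]] | [s1 [s2 [x [E [Hc Hx]]]]]].
    + symmetry in E. apply Hg in E. contradiction.
    + destruct Hc as [[Q1 Q2]|[[Q1 Q2]|[[[Q|Q] ->]| ->]]].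
      * right. exists n. apply/reach_iff; auto. rewrite E. eapply ltr_app; eauto.
      * left. exists n. apply/reach_iff; auto. rewrite E. eapply ltr_app; eauto.
      * left. eapply inf_of_fin; eauto.
      * right. eapply inf_of_fin; eauto.
      * apply verd_ltr in Hx. injection Hx as Hx. congruence.
  - intros [[n H]|[n H]]; exists n; apply (reach_iff _ _ Hz) in H; apply/reach_iff; auto.
    + destruct (follow (Defs.prefix t n) R2) as [y Hy].
      rewrite -(cats0 (Defs.prefix t n)). eapply ltr_app; [apply Hlift; eassumption|].
      eapply Ltau; [apply HL| constructor].
    + destruct (follow (Defs.prefix t n) R1) as [y Hy].
      rewrite -(cats0 (Defs.prefix t n)). eapply ltr_app; [apply Hlift; eassumption|].
      eapply Ltau; [apply HR| constructor].
Qed.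

Lemma part_unit A (g : mon A -> mon A -> mon A) u z (m1 m2 : mon A) t
  (Hu : u <> Vend) (Hzu : z <> u)
  (Hdec : forall a b s r, ltr (@mstep A) (g a b) s r -> Pdec u z g a b s r)
  (Hlift : forall a s a' b b', ltr (@mstep A) a s a' -> ltr (@mstep A) b s b' ->
       ltr (@mstep A) (g a b) s (g a' b'))
  (HL : forall m, mstep (g (MVerd u) m) None m)
  (HR : forall m, mstep (g m (MVerd u)) None m)
  (Hg : forall a b v, g a b <> MVerd v) :
  ((exists n, reaches_fin (g m1 m2) (Defs.prefix t n) u) <->
   (exists n, reaches_fin m1 (Defs.prefix t n) u) /\ (exists n, reaches_fin m2 (Defs.prefix t n) u)).
Proof.
  split.
  - intros [n H]. apply (reach_iff _ _ Hu) in H. apply Hdec in H.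
    destruct H as [[a' [b' [E _]]] | [s1 [s2 [x [E [Hc Hx]]]]]].
    + symmetry in E. apply Hg in E. contradiction.
    + destruct Hc as [[Q1 Q2]|[[Q1 Q2]|[[[Q|Q] ->]| ->]]].
      * split; [eapply inf_of_fin; eauto|].
        exists n. apply/reach_iff; auto. rewrite E. eapply ltr_app; eauto.
      * split; [|eapply inf_of_fin; eauto].
        exists n. apply/reach_iff; auto. rewrite E. eapply ltr_app; eauto.
      * apply verd_ltr in Hx. injection Hx as Hx. congruence.
      * apply verd_ltr in Hx. injection Hx as Hx. congruence.
      * apply verd_ltr in Hx. injection Hx as Hx. congruence.
  - intros [[n1 H1] [n2 H2]].
    apply (reach_iff _ _ Hu) in H1. apply (reach_iff _ _ Hu) in H2.
    destruct (leqP n1 n2) as [Hle|Hlt].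
    + exists n2. apply/reach_iff; auto.
      destruct (prefix_split t Hle) as [r Er]. rewrite Er in H2 *.
      destruct (ltr_split H2) as [y [Y1 Y2]].
      eapply ltr_app; [apply Hlift; eassumption|].
      eapply Ltau; [apply HL| exact Y2].
    + exists n1. apply/reach_iff; auto.
      destruct (prefix_split t (ltnW Hlt)) as [r Er]. rewrite Er in H1 *.
      destruct (ltr_split H1) as [y [Y1 Y2]].
      eapply ltr_app; [apply Hlift; eassumption|].
      eapply Ltau; [apply HR| exact Y2].
Qed.

Theorem mainTheorem4 (A : finType) (m1 m2 : mon A) (t : nat -> A) :
  reactive m1 -> reactive m2 ->
  (rejects_inf (MConj m1 m2) t <-> rejects_inf m1 t \/ rejects_inf m2 t) /\
  (accepts_inf (MConj m1 m2) t <-> accepts_inf m1 t /\ accepts_inf m2 t) /\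
  (rejects_inf (MDisj m1 m2) t <-> rejects_inf m1 t /\ rejects_inf m2 t) /\
  (accepts_inf (MDisj m1 m2) t <-> accepts_inf m1 t \/ accepts_inf m2 t).
Proof.
  intros R1 R2. unfold rejects_inf, accepts_inf, rejects_fin, accepts_fin.
  split; [|split; [|split]].
  - apply (@part_absorb A (@MConj A) Vyes Vno); try discriminate; auto.
    + exact (@conj_dec A).
    + exact (@conj_lift A).
    + intros; constructor.
    + intros; constructor.
  - apply (@part_unit A (@MConj A) Vyes Vno); try discriminate; auto.
    + exact (@conj_dec A).
    + exact (@conj_lift A).
    + intros; constructor.
    + intros; constructor.
  - apply (@part_unit A (@MDisj A) Vno Vyes); try discriminate; auto.
    + exact (@disj_dec A).
    + exact (@disj_lift A).
    + intros; constructor.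
    + intros; constructor.
  - apply (@part_absorb A (@MDisj A) Vno Vyes); try discriminate; auto.
    + exact (@disj_dec A).
    + exact (@disj_lift A).
    + intros; constructor.
    + intros; constructor.
Qed.
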